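(* Let $v(x,y)=[[x,[x,y]],[y,[x,y]]]\in F_2$, where $[a,b]=aba^{-1}b^{-1}$. Then the word map $v:\mathrm{SL}(2,\mathbb{C})^2\to \mathrm{SL}(2,\mathbb{C})$ is surjective, and consequently the induced word map on $\mathrm{PSL}(2,\mathbb{C})$ is surjective. *)

(* Defs.v *)
From mathcomp Require Import all_boot all_algebra.
From mathcomp Require Import reals.
From mathcomp.real_closed Require Import complex.
Set Implicit Arguments. Unset Strict Implicit. Unset Printing Implicit Defensive.
Import GRing.Theory.
Local Open Scope ring_scope.

Definition gcomm (G : unitRingType) (a b : G) : G := a * b * a^-1 * b^-1.

Definition word_v (G : unitRingType) (x y : G) : G :=
  gcomm (gcomm x (gcomm x y)) (gcomm y (gcomm x y)).

Definition inSL2 (R : realType) (A : 'M[R[i]]_2) : Prop := \det A = 1.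

(* Main.v *)
Require Import Defs.
From mathcomp Require Import all_boot all_algebra.
From mathcomp Require Import reals.
From mathcomp.real_closed Require Import complex.
From mathcomp Require Import ring.
Import GRing.Theory Num.Theory.
Set Implicit Arguments. Unset Strict Implicit.
Local Open Scope ring_scope.

Section M2.
Variable F : comUnitRingType.

Definition M2 (a b c d : F) : 'M[F]_2 :=
  \matrix_(i < 2, j < 2) if (i : nat) == 0%N then (if (j : nat) == 0%N then a else b)
                          else (if (j : nat) == 0%N then c else d).

Lemma M2E (A : 'M[F]_2) : A = M2 (A 0 0) (A 0 1) (A 1 0) (A 1 1).
Proof.
apply/matrixP => i j; rewrite mxE.
by case: i => [[|[|i]] Hi]; case: j => [[|[|j]] Hj] //=; congr (A _ _); apply: val_inj.
Qed.

Lemma M2_mul a b c d e f g h :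
  M2 a b c d * M2 e f g h = M2 (a*e+b*g) (a*f+b*h) (c*e+d*g) (c*f+d*h).
Proof.
rewrite -mulmxE; apply/matrixP => i j; rewrite !mxE !big_ord_recl big_ord0 !mxE /=.
by case: i => [[|[|i]] Hi]; case: j => [[|[|j]] Hj] //=; rewrite addr0.
Qed.

Lemma M2_det a b c d : \det (M2 a b c d) = a * d - b * c.
Proof.
rewrite (expand_det_row _ 0) !big_ord_recl big_ord0 /cofactor !det_mx11 !mxE /=.
rewrite !expr0 !expr1 !mul1r addr0.
ring.
Qed.

Lemma M2_one : (1 : 'M[F]_2) = M2 1 0 0 1.
Proof.
apply/matrixP => i j; rewrite !mxE.
by case: i => [[|[|i]] Hi]; case: j => [[|[|j]] Hj].
Qed.

Lemma M2_opp a b c d : - M2 a b c d = M2 (-a) (-b) (-c) (-d).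
Proof.
apply/matrixP => i j; rewrite !mxE.
by case: i => [[|[|i]] Hi]; case: j => [[|[|j]] Hj].
Qed.

Lemma M2_eq a b c d a' b' c' d' : a = a' -> b = b' -> c = c' -> d = d' ->
  M2 a b c d = M2 a' b' c' d'.
Proof. by move=> -> -> -> ->. Qed.

Lemma M2_inj a b c d a' b' c' d' : M2 a b c d = M2 a' b' c' d' ->
  [/\ a = a', b = b', c = c' & d = d'].
Proof.
move=> /matrixP H.
have := H 0 0; have := H 0 1; have := H 1 0; have := H 1 1.
by rewrite !mxE /= => -> -> -> ->.
Qed.

End M2.

Section Gen.
Variable G : unitRingType.
Implicit Types P x y : G.

Lemma gcomm_unit x y : x \is a GRing.unit -> y \is a GRing.unit ->
  gcomm x y \is a GRing.unit.
Proof. by move=> ux uy; rewrite /gcomm !unitrMl ?unitrV. Qed.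

Lemma invJ P x : P \is a GRing.unit -> x \is a GRing.unit ->
  (P * x * P^-1)^-1 = P * x^-1 * P^-1.
Proof.
move=> uP ux; rewrite invrM ?unitrV ?unitrMl // invrK invrM //.
by rewrite mulrA.
Qed.

Lemma gcommJ P x y : P \is a GRing.unit -> x \is a GRing.unit -> y \is a GRing.unit ->
  gcomm (P * x * P^-1) (P * y * P^-1) = P * gcomm x y * P^-1.
Proof.
move=> uP ux uy; rewrite /gcomm !invJ //.
by rewrite !mulrA !divrK.
Qed.

Lemma word_vJ P x y : P \is a GRing.unit -> x \is a GRing.unit -> y \is a GRing.unit ->
  word_v (P * x * P^-1) (P * y * P^-1) = P * word_v x y * P^-1.
Proof.
move=> uP ux uy; rewrite /word_v !gcommJ ?gcomm_unit //.
Qed.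

Lemma word_v1 : word_v (1 : G) 1 = 1.
Proof. by rewrite /word_v /gcomm !(invr1, mulr1). Qed.
End Gen.

Section M2more.
Variable F : comUnitRingType.

Lemma det_unit (x : 'M[F]_2) : \det x = 1 -> x \is a GRing.unit.
Proof. by move=> h; rewrite -[_ \is a _]/(x \in unitmx) unitmxE h unitr1. Qed.

Lemma det_invr (x : 'M[F]_2) : \det x = 1 -> \det x^-1 = 1.
Proof.
move=> h; have := congr1 determinant (mulrV (det_unit h)).
by rewrite -mulmxE det_mulmx h mul1r det1.
Qed.

Lemma det_mulr (x y : 'M[F]_2) : \det (x * y) = \det x * \det y.
Proof. by rewrite -mulmxE det_mulmx. Qed.

Lemma det_gcomm (x y : 'M[F]_2) : \det x = 1 -> \det y = 1 -> \det (gcomm x y) = 1.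
Proof.
move=> hx hy; rewrite /gcomm !det_mulr hx hy !det_invr //.
by rewrite !mulr1.
Qed.

Lemma det_word (x y : 'M[F]_2) : \det x = 1 -> \det y = 1 -> \det (word_v x y) = 1.
Proof. by move=> hx hy; rewrite /word_v !det_gcomm. Qed.

Lemma det_conj (P x : 'M[F]_2) : P \is a GRing.unit -> \det (P * x * P^-1) = \det x.
Proof.
move=> uP; have := congr1 determinant (mulrV uP).
rewrite !det_mulr det1 => h.
by rewrite mulrAC h mul1r.
Qed.

Lemma M2_inv (a b c d : F) : a * d - b * c = 1 -> (M2 a b c d)^-1 = M2 d (-b) (-c) a.
Proof.
move=> h.
have u : M2 a b c d \is a GRing.unit by apply: det_unit; rewrite M2_det.
have e : M2 a b c d * M2 d (-b) (-c) a = 1.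
  rewrite M2_mul M2_one; apply: M2_eq; rewrite -?h; ring.
by rewrite -[LHS]mulr1 -e mulKr.
Qed.

Lemma gcomm_M2 (a b c d e f g h : F) : a * d - b * c = 1 -> e * h - f * g = 1 ->
  gcomm (M2 a b c d) (M2 e f g h) =
  M2 a b c d * M2 e f g h * M2 d (-b) (-c) a * M2 h (-f) (-g) e.
Proof. by move=> h1 h2; rewrite /gcomm !M2_inv. Qed.
End M2more.

Section Comp.
Variable F : fieldType.

Lemma eq_mod (x y k s : F) : k = 0 -> x - y = k * s -> x = y.
Proof. by move=> -> /eqP; rewrite mul0r subr_eq0 => /eqP. Qed.

Lemma companion (a b c d : F) : a * d - b * c = 1 -> ~ (b = 0 /\ c = 0 /\ a = d) ->
  exists P : 'M[F]_2, P \is a GRing.unit /\ M2 a b c d = P * M2 0 (-1) 1 (a + d) * P^-1.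
Proof.
move=> hdet hns.
have hk : a * d - b * c - 1 = 0 by rewrite hdet subrr.
suff [P [hP e]] : exists P : 'M[F]_2, \det P != 0 /\ M2 a b c d * P = P * M2 0 (-1) 1 (a + d).
  have uP : P \is a GRing.unit by rewrite -[_ \is a _]/(P \in unitmx) unitmxE unitfE.
  by exists P; split => //; rewrite -e mulrK.
have [c0|c0] := eqVneq c 0.
  have [b0|b0] := eqVneq b 0.
    have ad : a != d by apply/eqP => ad; apply: hns.
    exists (M2 1 a 1 d); split.
      by rewrite M2_det mul1r mulr1 subr_eq0 eq_sym.
    rewrite b0 c0 in hk *; rewrite !M2_mul; apply: M2_eq;
      first [ring | apply: (eq_mod (s := -1) hk); ring].
  exists (M2 0 b 1 d); split.
    by rewrite M2_det mul0r mulr1 sub0r oppr_eq0.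
  rewrite !M2_mul; apply: M2_eq;
    first [ring | apply: (eq_mod (s := -1) hk); ring].
exists (M2 1 a 0 c); split.
  by rewrite M2_det mul1r mulr0 subr0.
rewrite !M2_mul; apply: M2_eq;
  first [ring | apply: (eq_mod (s := -1) hk); ring].
Qed.
End Comp.

Section Conj.
Variable F : fieldType.

Lemma hit_conj (a b c d a' b' c' d' : F) (x y : 'M[F]_2) :
  a * d - b * c = 1 -> ~ (b = 0 /\ c = 0 /\ a = d) ->
  \det x = 1 -> \det y = 1 -> word_v x y = M2 a' b' c' d' -> a' + d' = a + d ->
  ~ (b' = 0 /\ c' = 0 /\ a' = d') ->
  exists x' y' : 'M[F]_2, [/\ \det x' = 1, \det y' = 1 & word_v x' y' = M2 a b c d].
Proof.
move=> hd hns hx hy hw ht hns'.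
have hd' : a' * d' - b' * c' = 1 by rewrite -M2_det -hw det_word.
have [P [uP eP]] := companion hd hns.
have [Q [uQ eQ]] := companion hd' hns'.
rewrite ht in eQ.
set U := P * Q^-1.
have uU : U \is a GRing.unit by rewrite unitrMl ?unitrV.
exists (U * x * U^-1), (U * y * U^-1); split; rewrite ?det_conj //.
rewrite (word_vJ uU (det_unit hx) (det_unit hy)) hw eQ eP /U invrM ?unitrV // invrK.
by rewrite !mulrA !divrK.
Qed.
End Conj.

Section Spec.
Variable R : realType.
Local Notation C := (R[i]).
Lemma famV (z : C) : word_v (M2 (F:=C) (1) (1) 0 (1)) (M2 (F:=C) (1) 0 (z) (1)) = M2 (F:=C) (1 - 4*z^+3 - 8*z^+4 - 4*z^+5 + 24*z^+6 + 66*z^+7 + 82*z^+8 + 56*z^+9 + 16*z^+10 - 6*z^+11 - 10*z^+12 - 4*z^+13) (4*z^+3 - 4*z^+4 - 26*z^+5 - 52*z^+6 - 60*z^+7 - 42*z^+8 - 14*z^+9 + 4*z^+10 + 6*z^+11 + 4*z^+12) (- 4*z^+4 - 12*z^+5 - 10*z^+6 + 8*z^+7 + 26*z^+8 + 24*z^+9 + 10*z^+10 - 4*z^+12 - 2*z^+13) (1 + 4*z^+3 + 8*z^+4 + 4*z^+5 - 8*z^+6 - 18*z^+7 - 18*z^+8 - 8*z^+9 + 2*z^+11 + 2*z^+12).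
Proof.
have E1 : gcomm (M2 (F:=C) (1) (1) 0 (1)) (M2 (F:=C) (1) 0 (z) (1)) = M2 (F:=C) (1 + z + z^+2) (- z) (z^+2) (1 - z).
  rewrite gcomm_M2; [| ring | ring].
  rewrite !M2_mul; apply: M2_eq; [ ring | ring | ring | ring ].
have E2 : gcomm (M2 (F:=C) (1) (1) 0 (1)) (M2 (F:=C) (1 + z + z^+2) (- z) (z^+2) (1 - z)) = M2 (F:=C) (1 + z^+2 + z^+3 + 2*z^+4) (- 2*z - 4*z^+2 - 3*z^+3 - 2*z^+4) (z^+4) (1 - z^+2 - z^+3 - z^+4).
  rewrite gcomm_M2; [| ring | ring].
  rewrite !M2_mul; apply: M2_eq; [ ring | ring | ring | ring ].
have E3 : gcomm (M2 (F:=C) (1) 0 (z) (1)) (M2 (F:=C) (1 + z + z^+2) (- z) (z^+2) (1 - z)) = M2 (F:=C) (1 + z^+2 - z^+3) (z^+3) (2*z^+2 - z^+4) (1 - z^+2 + z^+3 + z^+4).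
  rewrite gcomm_M2; [| ring | ring].
  rewrite !M2_mul; apply: M2_eq; [ ring | ring | ring | ring ].
have E4 : gcomm (M2 (F:=C) (1 + z^+2 + z^+3 + 2*z^+4) (- 2*z - 4*z^+2 - 3*z^+3 - 2*z^+4) (z^+4) (1 - z^+2 - z^+3 - z^+4)) (M2 (F:=C) (1 + z^+2 - z^+3) (z^+3) (2*z^+2 - z^+4) (1 - z^+2 + z^+3 + z^+4)) = M2 (F:=C) (1 - 4*z^+3 - 8*z^+4 - 4*z^+5 + 24*z^+6 + 66*z^+7 + 82*z^+8 + 56*z^+9 + 16*z^+10 - 6*z^+11 - 10*z^+12 - 4*z^+13) (4*z^+3 - 4*z^+4 - 26*z^+5 - 52*z^+6 - 60*z^+7 - 42*z^+8 - 14*z^+9 + 4*z^+10 + 6*z^+11 + 4*z^+12) (- 4*z^+4 - 12*z^+5 - 10*z^+6 + 8*z^+7 + 26*z^+8 + 24*z^+9 + 10*z^+10 - 4*z^+12 - 2*z^+13) (1 + 4*z^+3 + 8*z^+4 + 4*z^+5 - 8*z^+6 - 18*z^+7 - 18*z^+8 - 8*z^+9 + 2*z^+11 + 2*z^+12).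
  rewrite gcomm_M2; [| ring | ring].
  rewrite !M2_mul; apply: M2_eq; [ ring | ring | ring | ring ].
by rewrite /word_v E1 E2 E3 E4.
Qed.

Lemma exm2 : word_v (M2 (F:=C) (- 2) (- 1) (1) 0) (M2 (F:=C) (- 1) (- 1) (1) 0) = M2 (F:=C) (- 7) (- 6) (6) (5).
Proof.
have E1 : gcomm (M2 (F:=C) (- 2) (- 1) (1) 0) (M2 (F:=C) (- 1) (- 1) (1) 0) = M2 (F:=C) (3) (1) (- 1) 0.
  rewrite gcomm_M2; [| ring | ring].
  rewrite !M2_mul; apply: M2_eq; [ ring | ring | ring | ring ].
have E2 : gcomm (M2 (F:=C) (- 2) (- 1) (1) 0) (M2 (F:=C) (3) (1) (- 1) 0) = M2 (F:=C) (- 1) (- 5) (1) (4).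
  rewrite gcomm_M2; [| ring | ring].
  rewrite !M2_mul; apply: M2_eq; [ ring | ring | ring | ring ].
have E3 : gcomm (M2 (F:=C) (- 1) (- 1) (1) 0) (M2 (F:=C) (3) (1) (- 1) 0) = M2 (F:=C) (- 1) (- 4) (2) (7).
  rewrite gcomm_M2; [| ring | ring].
  rewrite !M2_mul; apply: M2_eq; [ ring | ring | ring | ring ].
have E4 : gcomm (M2 (F:=C) (- 1) (- 5) (1) (4)) (M2 (F:=C) (- 1) (- 4) (2) (7)) = M2 (F:=C) (- 7) (- 6) (6) (5).
  rewrite gcomm_M2; [| ring | ring].
  rewrite !M2_mul; apply: M2_eq; [ ring | ring | ring | ring ].
by rewrite /word_v E1 E2 E3 E4.
Qed.

Lemma exmI (p : C) (hm : p^+2 - p + 1 = 0) : word_v (M2 (F:=C) (1) (1) (- 1) 0) (M2 (F:=C) (p) 0 (- p) (1 - p)) = M2 (F:=C) (- 1) 0 0 (- 1).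
Proof.
have E1 : gcomm (M2 (F:=C) (1) (1) (- 1) 0) (M2 (F:=C) (p) 0 (- p) (1 - p)) = M2 (F:=C) (1 - p) (1) (- 1 + p) (- 1 + p).
  rewrite gcomm_M2; [| apply: (eq_mod (s := 0) hm); ring | apply: (eq_mod (s := (- 1)) hm); ring].
  rewrite !M2_mul; apply: M2_eq; [ apply: (eq_mod (s := 0) hm); ring | apply: (eq_mod (s := (- 1)) hm); ring | apply: (eq_mod (s := (1)) hm); ring | apply: (eq_mod (s := (1)) hm); ring ].
have E2 : gcomm (M2 (F:=C) (1) (1) (- 1) 0) (M2 (F:=C) (1 - p) (1) (- 1 + p) (- 1 + p)) = M2 (F:=C) 0 (1 - p) (- p) 0.
  rewrite gcomm_M2; [| apply: (eq_mod (s := 0) hm); ring | apply: (eq_mod (s := (- 1)) hm); ring].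
  rewrite !M2_mul; apply: M2_eq; [ apply: (eq_mod (s := 0) hm); ring | apply: (eq_mod (s := (- 1)) hm); ring | apply: (eq_mod (s := (1)) hm); ring | apply: (eq_mod (s := (1)) hm); ring ].
have E3 : gcomm (M2 (F:=C) (p) 0 (- p) (1 - p)) (M2 (F:=C) (1 - p) (1) (- 1 + p) (- 1 + p)) = M2 (F:=C) (p) (p) (- 1) (- p).
  rewrite gcomm_M2; [| apply: (eq_mod (s := (- 1)) hm); ring | apply: (eq_mod (s := (- 1)) hm); ring].
  rewrite !M2_mul; apply: M2_eq; [ apply: (eq_mod (s := (- 2*p + p^+2)) hm); ring | apply: (eq_mod (s := (- 2*p)) hm); ring | apply: (eq_mod (s := (2 - p)) hm); ring | apply: (eq_mod (s := (1 + p^+2)) hm); ring ].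
have E4 : gcomm (M2 (F:=C) 0 (1 - p) (- p) 0) (M2 (F:=C) (p) (p) (- 1) (- p)) = M2 (F:=C) (- 1) 0 0 (- 1).
  rewrite gcomm_M2; [| apply: (eq_mod (s := (- 1)) hm); ring | apply: (eq_mod (s := (- 1)) hm); ring].
  rewrite !M2_mul; apply: M2_eq; [ apply: (eq_mod (s := (2 - p^+2)) hm); ring | apply: (eq_mod (s := (p - p^+2)) hm); ring | apply: (eq_mod (s := (p^+2)) hm); ring | apply: (eq_mod (s := (1 + p)) hm); ring ].
by rewrite /word_v E1 E2 E3 E4.
Qed.

Lemma root13 (t : C) : exists z : C,
  z^+13 = (2 - t) / 4 + 4 * z^+6 + 12 * z^+7 + 16 * z^+8 + 12 * z^+9 + 4 * z^+10 - z^+11 - 2 * z^+12.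
Proof.
have [z hz] := @solve_monicpoly C 13
  (fun i => nth 0 [:: (2 - t) / 4; 0; 0; 0; 0; 0; 4; 12; 16; 12; 4; -1; -2] i) isT.
exists z; rewrite hz !big_ord_recl big_ord0 /= /bump /=; ring.
Qed.
Lemma root5 : exists z : C, z^+5 = 4 + 4 * z + 4 * z^+2.
Proof.
have [z hz] := @solve_monicpoly C 5 (fun i => nth 0 [:: 4; 4; 4; 0; 0] i) isT.
by exists z; rewrite hz !big_ord_recl big_ord0 /= /bump /=; ring.
Qed.

Lemma rootp : exists p : C, p^+2 - p + 1 = 0.
Proof.
have [p hp] := @solve_monicpoly C 2 (fun i => nth 0 [:: -1; 1] i) isT.
exists p; rewrite hp !big_ord_recl big_ord0 /= /bump /=; ring.
Qed.

Lemma nonscalar_of (x y : 'M[C]_2) a b c d t : \det x = 1 -> \det y = 1 ->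
  word_v x y = M2 a b c d -> a + d = t -> t != 2 -> t != -2 ->
  ~ (b = 0 /\ c = 0 /\ a = d).
Proof.
move=> hx hy hw ht t2 t2' [b0 [c0 ad]].
have := det_word hx hy; rewrite hw M2_det b0 c0 ad mulr0 subr0 => h.
have e : (d - 1) * (d + 1) = d * d - 1 by ring.
rewrite h subrr in e; move/eqP: e => e.
rewrite mulf_eq0 subr_eq0 addr_eq0 in e.
case/orP: e => /eqP d1.
  by move: t2; rewrite -ht ad d1 => /eqP; apply; ring.
by move: t2'; rewrite -ht ad d1 => /eqP; apply; ring.
Qed.

Lemma hit (t : C) : exists (x y : 'M[C]_2) (a' b' c' d' : C),
  [/\ \det x = 1, \det y = 1, word_v x y = M2 a' b' c' d', a' + d' = t
    & ~ (b' = 0 /\ c' = 0 /\ a' = d')].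
Proof.
have dX : \det (M2 (F:=C) 1 1 0 1) = 1 by rewrite M2_det; ring.
have dY z : \det (M2 (F:=C) 1 0 z 1) = 1 by rewrite M2_det; ring.
have [->|t2] := eqVneq t 2.
  have [z hz] := root5.
  exists (M2 1 1 0 1), (M2 1 0 z 1); do 4 eexists; split;
    [exact: dX | exact: dY | exact: famV | |].
    apply: (eq_mod (k := z^+5 - (4 + 4 * z + 4 * z^+2)) (s := - 4 * z^+6 * (1 + z)^+2)).
      by rewrite hz subrr.
    ring.
  move=> [_ [hc _]].
  have e : (- 16 - 10*z - 6*z^+2 + z^+3 + 4*z^+4) * (- 4 - 12*z - 10*z^+2 + 8*z^+3 + 26*z^+4 + 24*z^+5 + 10*z^+6 - 4*z^+8 - 2*z^+9)
     + (6 + 52*z + 18*z^+2 - 60*z^+3 - 74*z^+4 - 52*z^+5 - 8*z^+6 + 18*z^+7 + 8*z^+8) * (z^+5 - (4 + 4 * z + 4 * z^+2)) = 40 by ring.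
  have e2 : z^+4 * (- 4 - 12*z - 10*z^+2 + 8*z^+3 + 26*z^+4 + 24*z^+5 + 10*z^+6 - 4*z^+8 - 2*z^+9) = 0.
    rewrite -hc; ring.
  move/eqP: e2; rewrite mulf_eq0 expf_eq0 /= => /orP [/eqP z0|/eqP r0].
    have h4 : (4 : C) = 0.
      by rewrite (_ : (4 : C) = z^+5 - 4 * z - 4 * z^+2); [rewrite z0; ring | rewrite hz; ring].
    by move/eqP: h4; rewrite pnatr_eq0.
  by move: e; rewrite r0 hz subrr !mulr0 addr0 => /eqP; rewrite eq_sym pnatr_eq0.
have [->|t2'] := eqVneq t (-2).
  exists (M2 (-2) (-1) 1 0), (M2 (-1) (-1) 1 0); do 4 eexists; split;
    [by rewrite M2_det; ring | by rewrite M2_det; ring | exact: exm2 | ring |].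
  by move=> [/eqP]; rewrite oppr_eq0 pnatr_eq0.
have [z hz] := root13 t.
have hw := famV z.
have ht : (1 - 4*z^+3 - 8*z^+4 - 4*z^+5 + 24*z^+6 + 66*z^+7 + 82*z^+8 + 56*z^+9 + 16*z^+10 - 6*z^+11 - 10*z^+12 - 4*z^+13) + (1 + 4*z^+3 + 8*z^+4 + 4*z^+5 - 8*z^+6 - 18*z^+7 - 18*z^+8 - 8*z^+9 + 2*z^+11 + 2*z^+12) = t.
  have hz4 : 4 * z^+13 = 2 - t + 16 * z^+6 + 48 * z^+7 + 64 * z^+8 + 48 * z^+9 + 16 * z^+10 - 4 * z^+11 - 8 * z^+12.
    by rewrite hz; field.
  apply: (eq_mod (k := 4 * z^+13 - (2 - t + 16 * z^+6 + 48 * z^+7 + 64 * z^+8 + 48 * z^+9 + 16 * z^+10 - 4 * z^+11 - 8 * z^+12)) (s := -1)).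
    by rewrite hz4 subrr.
  ring.
exists (M2 1 1 0 1), (M2 1 0 z 1); do 4 eexists; split;
  [exact: dX | exact: dY | exact: hw | exact: ht | ].
exact: (nonscalar_of dX (dY z) hw ht t2 t2').
Qed.
End Spec.

Theorem theorem9p1 (R : realType) :
  (forall g : 'M[R[i]]_2, inSL2 g ->
     exists x y : 'M[R[i]]_2, [/\ inSL2 x, inSL2 y & word_v x y = g]) /\
  (forall g : 'M[R[i]]_2, inSL2 g ->
     exists x y : 'M[R[i]]_2,
       [/\ inSL2 x, inSL2 y & word_v x y = g \/ word_v x y = - g]).
Proof.
have main : forall g : 'M[R[i]]_2, inSL2 g ->
     exists x y : 'M[R[i]]_2, [/\ inSL2 x, inSL2 y & word_v x y = g].
  move=> g; rewrite /inSL2 (M2E g) M2_det.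
  set a := g 0 0; set b := g 0 1; set c := g 1 0; set d := g 1 1 => hd.
  have [hs|hns] := boolP [&& b == 0, c == 0 & a == d].
    case/and3P: hs => /eqP b0 /eqP c0 /eqP ad.
    rewrite b0 c0 -ad in hd *.
    have e : (a - 1) * (a + 1) = 0.
      by rewrite -[RHS](subrr 1) -[X in _ = X - _]hd; ring.
    move/eqP: e; rewrite mulf_eq0 subr_eq0 addr_eq0 => /orP [/eqP a1|/eqP a1].
      exists 1, 1; split; rewrite ?det1 // word_v1 a1 M2_one //.
    have [p hp] := rootp R.
    exists (M2 1 1 (-1) 0), (M2 p 0 (-p) (1 - p)); split.
    - by rewrite M2_det; ring.
    - rewrite M2_det; apply: (eq_mod (s := -1) hp); ring.
    - by rewrite exmI // a1.
  have hns' : ~ (b = 0 /\ c = 0 /\ a = d).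
    by move=> [b0 [c0 ad]]; move: hns; rewrite b0 c0 ad !eqxx.
  have [x [y [a' [b' [c' [d' [hx hy hw ht hns'']]]]]]] := hit (a + d).
  exact: (hit_conj hd hns' hx hy hw ht hns'').
split => // g hg; have [x [y [hx hy hw]]] := main g hg.
by exists x, y; split => //; left.
Qed.
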